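(* There exist constants $A,B>0$ such that for all $k\in\mathbb{N}$ and all $a\geq1$, $\mathbf{T}^{(\infty,a-)}_{k+1}\leq A\rho_\infty^k\exp(-Bk/a)$.
   Context: $\mathbf{T}^{(\infty,a-)}_{n}$ denotes the number of rooted unordered trees with $n$ vertices (no constraint on degrees) all of whose subtrees rooted at the children of the root have at most $a$ vertices. By Otter's theorem, the number of rooted unordered trees with $n$ vertices is asymptotic to $\kappa_\infty\rho_\infty^nn^{-3/2}$ for constants $\kappa_\infty>0$, $\rho_\infty>1$. *)

(* Defs.v *)
From mathcomp Require Import ssreflect ssrfun ssrbool eqtype ssrnat seq choice path.
From Stdlib Require Import Reals.

Set Implicit Arguments.
Unset Strict Implicit.

(* Rooted (plane) trees are represented as GenTree.tree unit built only from
   the constructor [GenTree.Node 0]; a vertex is a node, its children are the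
   list of subtrees.  Children are normalised by sorting
   along the lexicographic order of their parenthesis codes. *)
Definition rtree := GenTree.tree unit.
Definition rnode (s : seq rtree) : rtree := GenTree.Node 0 s.

Fixpoint nv (t : rtree) : nat :=
  match t with
  | GenTree.Leaf _ => 1
  | GenTree.Node _ s => (sumn (map nv s)).+1
  end.

Definition children (t : rtree) : seq rtree :=
  match t with GenTree.Leaf _ => [::] | GenTree.Node _ s => s end.

(* parenthesis (DFS) code of a tree; injective on trees built from [rnode] *)
Fixpoint tcode (t : rtree) : seq bool :=
  match t with
  | GenTree.Leaf _ => [:: false; true]
  | GenTree.Node _ s => true :: flatten (map tcode s) ++ [:: false]
  end.

Fixpoint lexle (u v : seq bool) : bool :=
  match u, v with
  | [::], _ => true
  | _ :: _, [::] => false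
  | x :: u', y :: v' => if x == y then lexle u' v' else (~~ x) && y
  end.

(* canonical representative of the isomorphism class of unordered rooted
   trees: recursively sort the children *)
Fixpoint canon (t : rtree) : rtree :=
  match t with
  | GenTree.Leaf x => GenTree.Leaf x
  | GenTree.Node n s =>
      GenTree.Node n (sort (fun x y => lexle (tcode x) (tcode y)) (map canon s))
  end.

(* forests fuel k : all ordered sequences of plane trees with k vertices in
   total (correct when fuel >= k) *)
Fixpoint forests (fuel k : nat) : seq (seq rtree) :=
  match fuel with
  | 0 => if k == 0 then [:: [::]] else [::]
  | fuel'.+1 =>
      if k is 0 then [:: [::]] else
      flatten [seq [seq rnode f :: g | f <- forests fuel' i,
                                       g <- forests fuel' (k - i.+1)]
              | i <- iota 0 k]
  end.

Definition plane_trees (n : nat) : seq rtree :=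
  if n is n'.+1 then map rnode (forests n' n') else [::].

Definition T_inf (n : nat) : nat := size (undup (map canon (plane_trees n))).

(* T^{(infty, a-)}_n : number of rooted unordered trees with n vertices all of
   whose subtrees rooted at the children of the root have at most a vertices *)
Definition small_children (a : R) (t : rtree) : bool :=
  all (fun c => if Rle_dec (INR (nv c)) a then true else false) (children t).

Definition T_inf_a (a : R) (n : nat) : nat :=
  size (undup (map canon [seq t <- plane_trees n | small_children a t])).

(* Main.v *)
Require Import Defs.
From Stdlib Require Import Reals.
From Coquelicot Require Import Coquelicot.
From Stdlib Require Import ZArith Lra Lia.

Module Aux.
From mathcomp Require Import ssreflect ssrfun ssrbool eqtype ssrnat seq choice path.
From mathcomp Require Import zify.
Open Scope nat_scope.

Lemma tree_ind' (P : rtree -> Prop) :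
  (forall x, P (GenTree.Leaf x)) ->
  (forall n s, (forall c, List.In c s -> P c) -> P (GenTree.Node n s)) ->
  forall t, P t.
Proof.
move=> HL HN.
refine (fix IH t := match t with GenTree.Leaf x => HL x | GenTree.Node n s => HN n s _ end).
refine ((fix F s : forall c, List.In c s -> P c :=
  match s with [::] => fun c H => False_ind _ H
  | x :: s' => fun c H => match H with or_introl E => eq_ind x P (IH x) c E | or_intror H' => F s' c H' end end) s).
Qed.

Lemma inP' (T : eqType) (c : T) s : c \in s -> List.In c s.
Proof. elim: s => //= x s IH; rewrite inE => /orP[/eqP ->|/IH]; tauto. Qed.

Lemma lexle_total : total lexle.
Proof.
elim=> [|x u IH] [|y v] //=; rewrite ?orbT //.
by case: x y => [] [] /=.
Qed.

Lemma lexle_trans : transitive lexle.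
Proof.
move=> v u; elim: u v => [|x u IH] [|y v] [|z w] //=.
by case: x y z => [] [] [] //= ; apply: IH.
Qed.

Definition leT (x y : rtree) := lexle (tcode x) (tcode y).
Lemma leT_total : total leT. Proof. by move=> x y; apply: lexle_total. Qed.
Lemma leT_trans : transitive leT. Proof. by move=> x y z; apply: lexle_trans. Qed.

Lemma canon_node n s : canon (GenTree.Node n s) = GenTree.Node n (sort leT (map canon s)).
Proof. by []. Qed.

Lemma canonK t : canon (canon t) = canon t.
Proof.
elim/tree_ind': t => [//|n s IH].
rewrite canon_node canon_node; congr GenTree.Node.
have -> : map canon (sort leT (map canon s)) = sort leT (map canon s).
  apply: map_id_in => x; rewrite mem_sort => /mapP[c cs ->].
  by rewrite IH //; apply: inP'.
by apply: sorted_sort; [exact: leT_trans | exact: sort_sorted leT_total _].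
Qed.
Fixpoint wf (t : rtree) : bool :=
  match t with GenTree.Leaf _ => false | GenTree.Node n s => (n == 0) && all wf s end.

Lemma nv_gt0 t : 0 < nv t. Proof. by case: t. Qed.

Lemma sumn_nv0 f : sumn (map nv f) = 0 -> f = [::].
Proof. by case: f => //= c f; case: c. Qed.

Lemma forests_sound fuel k f : f \in forests fuel k -> all wf f && (sumn (map nv f) == k).
Proof.
elim: fuel k f => [|fuel IH] k f /=.
  by case: (k == 0) /eqP => [->|_]; rewrite ?inE // => /eqP ->.
case: k => [|k]; first by rewrite inE => /eqP ->.
move=> /flatten_mapP[i]; rewrite mem_iota /= => ilt /allpairsP[[f0 g] [/= /IH/andP[w0 /eqP s0] /IH/andP[w1 /eqP s1] ->]].
rewrite /= w0 w1 /= s0 s1; apply/eqP; rewrite subnKC //.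
Qed.

Lemma forests_S fuel k : forests fuel.+1 k.+1 =
  flatten [seq [seq rnode f :: g | f <- forests fuel i, g <- forests fuel (k.+1 - i.+1)]
              | i <- iota 0 k.+1].
Proof. by []. Qed.

Lemma forests_complete fuel k f : all wf f -> sumn (map nv f) = k -> k <= fuel ->
  f \in forests fuel k.
Proof.
elim: fuel k f => [|fuel IH] k f wff sf.
  by rewrite leqn0 => /eqP k0; move: sf; rewrite k0 => /sumn_nv0 ->.
case: k sf => [|k] sf kle.
  by move/sumn_nv0: sf => ->; rewrite inE.
rewrite forests_S.
case: f wff sf => [//|c g] /andP[wc wg] sf.
case: c wc sf => [//|n f0] /andP[/eqP n0 wf0] sf; subst n; rewrite /= in sf.
apply/flatten_mapP; exists (sumn (map nv f0)).
  by rewrite mem_iota /=; lia.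
apply: (allpairs_f (fun f g => rnode f :: g)).
  by apply: IH => //; lia.
by apply: IH => //; lia.
Qed.

Lemma plane_trees_sound n t : t \in plane_trees n -> wf t && (nv t == n).
Proof.
case: n => [//|n] /mapP[f /forests_sound/andP[w /eqP s] ->].
by rewrite /= w s eqxx.
Qed.

Lemma plane_trees_complete t : wf t -> t \in plane_trees (nv t).
Proof.
case: t => //= n f /andP[/eqP -> w]; apply: map_f.
exact: forests_complete.
Qed.

Lemma canon_nv t : nv (canon t) = nv t.
Proof.
elim/tree_ind': t => // n s IH /=; congr S.
rewrite (perm_sumn (perm_map nv (permEl (perm_sort leT _)))) -map_comp.
by congr sumn; apply/eq_in_map => c /inP' /IH.
Qed.

Lemma canon_wf t : wf (canon t) = wf t.
Proof.
elim/tree_ind': t => // n s IH /=; congr andb.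
rewrite (perm_all _ (permEl (perm_sort leT _))) all_map.
by apply: eq_in_all => c /inP' /IH.
Qed.

Lemma canon_small a t : small_children a (canon t) = small_children a t.
Proof.
case: t => // n s; rewrite /small_children /=.
rewrite (perm_all _ (permEl (perm_sort leT _))) all_map.
by apply: eq_all => c /=; rewrite canon_nv.
Qed.
Definition St n := undup (map canon (plane_trees n)).
Definition Sa a n := undup (map canon [seq t <- plane_trees n | small_children a t]).

Lemma St_mem n x : x \in St n -> [&& wf x, nv x == n & canon x == x].
Proof.
rewrite mem_undup => /mapP[t /plane_trees_sound/andP[w /eqP e] ->].
by rewrite canon_wf canon_nv canonK w e !eqxx.
Qed.

Lemma St_in x : wf x -> canon x = x -> x \in St (nv x).
Proof.
move=> w c; rewrite mem_undup; apply/mapP; exists x => //.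
exact: plane_trees_complete.
Qed.

Lemma Sa_mem a n x : x \in Sa a n ->
  [&& wf x, nv x == n, canon x == x & small_children a x].
Proof.
rewrite mem_undup => /mapP[t]; rewrite mem_filter => /andP[sm /plane_trees_sound/andP[w /eqP e]] ->.
by rewrite canon_wf canon_nv canonK canon_small w e sm !eqxx.
Qed.

Lemma Sa_in a x : wf x -> canon x = x -> small_children a x -> x \in Sa a (nv x).
Proof.
move=> w c sm; rewrite mem_undup; apply/mapP; exists x => //.
by rewrite mem_filter sm plane_trees_complete.
Qed.

Lemma Sa_St a n : size (Sa a n) <= size (St n).
Proof.
apply: uniq_leq_size; first exact: undup_uniq.
move=> x; rewrite !mem_undup => /mapP[t]; rewrite mem_filter => /andP[_ tp] ->.
exact: map_f.
Qed.

Lemma canonical_ok (cs l : seq rtree) : (forall c, c \in cs -> canon c = c) -> {subset l <= cs} ->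
  sorted leT l -> canon (rnode l) = rnode l.
Proof.
move=> Hc Hl Hs; rewrite /rnode canon_node (map_id_in (f:=canon)); last first.
  by move=> c /Hl /Hc.
by rewrite sorted_sort //; exact: leT_trans.
Qed.

Lemma canonical_children cs : canon (rnode cs) = rnode cs ->
  (forall c, c \in cs -> canon c = c) /\ sorted leT cs.
Proof.
rewrite /rnode canon_node => [[E]]; split; last by rewrite -E; apply: sort_sorted leT_total _.
move=> c; rewrite -E mem_sort => /mapP[c' _ ->]; exact: canonK.
Qed.

Fixpoint cut (M acc : nat) (cs : seq rtree) : nat :=
  match cs with
  | [::] => 0
  | c :: cs' => if M <= acc + nv c then 1 else (cut M (acc + nv c) cs').+1
  end.

Lemma cut_spec M acc cs : acc < M -> M <= acc + sumn (map nv cs) ->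
  all (fun c => nv c <= M) cs ->
  M <= acc + sumn (map nv (take (cut M acc cs) cs)) < M + M.
Proof.
elim: cs acc => [|c cs IH] acc /=; first by rewrite addn0 => H1 H2; lia.
move=> H1 H2 /andP[H3 H4].
case: ifP => H5 /=.
  by rewrite take0 /= addn0; lia.
rewrite addnA; apply: IH => //; [lia | by rewrite -addnA].
Qed.
Definition phi (M : nat) (x : rtree) :=
  let cs := children x in let i := cut M 0 cs in (rnode (take i cs), rnode (drop i cs)).

Lemma wf_node {x : rtree} : wf x -> x = rnode (children x).
Proof. by case: x => [//|n cs] /andP[/eqP -> _]. Qed.

Lemma count_split (a : R) M k : 0 < M -> (a <= INR M)%R -> M <= k ->
  size (Sa a k.+1) <= sumn [seq size (St j.+1) * size (Sa a (k.+1 - j)) | j <- iota M M].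
Proof.
move=> M0 aM Mk.
set P := flatten [seq [seq (u, v) | u <- St j.+1, v <- Sa a (k.+1 - j)] | j <- iota M M].
have -> : sumn [seq size (St j.+1) * size (Sa a (k.+1 - j)) | j <- iota M M] = size P.
  rewrite /P size_flatten /shape -map_comp; congr sumn; apply: eq_map => j /=.
  by rewrite size_allpairs.
rewrite -(size_map (phi M)); apply: uniq_leq_size.
  rewrite map_inj_in_uniq; first exact: undup_uniq.
  move=> x1 x2 /Sa_mem/and4P[w1 _ _ _] /Sa_mem/and4P[w2 _ _ _] [E1 E2].
  rewrite (wf_node w1) (wf_node w2) -(cat_take_drop (cut M 0 (children x1)) (children x1)).
  by rewrite -(cat_take_drop (cut M 0 (children x2)) (children x2)) E1 E2.
move=> p /mapP[x /Sa_mem/and4P[w /eqP nx /eqP cx sm] ->].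
case: x w nx cx sm => [//|n cs] /andP[/eqP n0 wcs] [nx] cx sm; subst n.
rewrite /phi /=.
have Hc := canonical_children cs cx.
have allM : all (fun c => nv c <= M) cs.
  apply/allP => c cin; move: sm; rewrite /small_children /= => /allP /(_ c cin).
  case: Rle_dec => // H _; apply/leP/INR_le; exact: Rle_trans H aM.
set i := cut M 0 cs.
have := @cut_spec M 0 cs M0 _ allM; rewrite add0n nx => /(_ Mk) /andP[H1 H2].
set j := sumn (map nv (take i cs)) in H1 H2.
have Hk : k = j + sumn (map nv (drop i cs)).
  by rewrite -nx -sumn_cat -map_cat cat_take_drop.
apply/flatten_mapP; exists j; first by rewrite mem_iota H1 H2.
apply: (allpairs_f (fun u v => (u, v))).
  have -> : j.+1 = nv (rnode (take i cs)) by [].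
  apply: St_in.
    by apply/allP => c /mem_take /(allP wcs).
  apply: (@canonical_ok cs); [by case: Hc | exact: mem_take | ].
  by case: Hc => _ Hs; exact: take_sorted.
have -> : k.+1 - j = nv (rnode (drop i cs)).
  by change (nv (rnode _)) with (sumn (map nv (drop i cs))).+1; lia.
apply: Sa_in.
- by apply/allP => c /mem_drop /(allP wcs).
- apply: (@canonical_ok cs); [by case: Hc | exact: mem_drop | ].
  by case: Hc => _ Hs; exact: drop_sorted.
- move: sm; rewrite /small_children /= => /allP H.
  by apply/allP => c /mem_drop /H.
Qed.

Open Scope R_scope.

Lemma exp_mono x y : x <= y -> exp x <= exp y.
Proof. move=> H; case: (Rle_lt_or_eq_dec _ _ H) => [/exp_increasing|->]; lra. Qed.

Lemma fold_le (l : seq nat) (w : nat -> R) b :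
  (forall j, j \in l -> w j <= b) ->
  foldr (fun j acc => w j + acc) 0 l <= INR (size l) * b.
Proof.
elim: l => [|x l IH] H; first by rewrite /=; lra.
rewrite [size _]/= S_INR /=; have := H x (mem_head _ _).
have := IH (fun j jl => H j (mem_behead (s := x :: l) jl)); lra.
Qed.

Lemma sum_le (l : seq nat) (f : nat -> nat) (w : nat -> R) W :
  (forall j, j \in l -> INR (f j) <= w j * W) ->
  INR (sumn (map f l)) <= foldr (fun j acc => w j + acc) 0 l * W.
Proof.
elim: l => [|x l IH] H; first by rewrite /=; lra.
rewrite /= plus_INR; have := H x (mem_head _ _).
have := IH (fun j jl => H j (mem_behead (s := x :: l) jl)); lra.
Qed.

Lemma finmax (g : nat -> R) (K : nat) : exists D, forall k, (k < K)%nat -> g k <= D.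
Proof.
elim: K => [|K [D HD]]; first by exists 0.
exists (Rmax D (g K)) => k; rewrite ltnS leq_eqVlt => /orP[/eqP ->|/HD H].
  exact: Rmax_r.
exact: Rle_trans H (Rmax_l _ _).
Qed.

Lemma INR_leP {m n : nat} : (m <= n)%nat -> INR m <= INR n.
Proof. by move/leP; apply: le_INR. Qed.
Definition R3 (n : nat) := Rpower (INR n) (-3/2).

Lemma R3_pos n : 0 < R3 n. Proof. rewrite /R3 /Rpower; exact: exp_pos. Qed.

Lemma R3_mono {m n : nat} : (1 <= m)%nat -> (m <= n)%nat -> R3 n <= R3 m.
Proof.
move=> m1 mn; rewrite /R3 /Rpower; apply: exp_mono.
have H1 : 1 <= INR m by have := INR_leP m1.
have := ln_le (INR m) (INR n) ltac:(lra) (INR_leP mn); lra.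
Qed.

Lemma R3_le1 {n : nat} : (1 <= n)%nat -> R3 n <= 1.
Proof. move=> n1; have := R3_mono (leqnn 1) n1; rewrite /R3 /Rpower /= ln_1 Rmult_0_r exp_0; lra. Qed.

Lemma M_R3 M : (1 <= M)%nat -> INR M * R3 M = exp (- (1/2) * ln (INR M)).
Proof.
move=> M1; have H1 : 1 <= INR M by have := INR_leP M1.
rewrite /R3 /Rpower -{1}(exp_ln (INR M)); last lra.
rewrite -exp_plus; congr exp; lra.
Qed.

Lemma lim_bound kappa rho : 0 < kappa -> 1 < rho ->
  is_lim_seq (fun n : nat => INR (T_inf n) /
                 (kappa * rho ^ n * Rpower (INR n) (-3/2))) 1 ->
  exists N, (1 <= N)%nat /\ forall n, (N <= n)%nat -> INR (T_inf n) <= 2 * kappa * rho ^ n * R3 n.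
Proof.
move=> k0 r1 /is_lim_seq_spec H.
have [N HN] := H (mkposreal 1 Rlt_0_1).
exists (maxn N 1); split; first by rewrite leq_max leqnn orbT.
move=> n; rewrite geq_max => /andP[/leP Nn _].
have := HN n Nn => /= /Rabs_def2 [Hu _].
have Hd : 0 < kappa * rho ^ n * R3 n.
  apply: Rmult_lt_0_compat; last exact: R3_pos.
  apply: Rmult_lt_0_compat => //; apply: pow_lt; lra.
rewrite -/(R3 n) in Hu.
have E : INR (T_inf n) / (kappa * rho ^ n * R3 n) * (kappa * rho ^ n * R3 n) = INR (T_inf n).
  by rewrite /Rdiv Rmult_assoc Rinv_l ?Rmult_1_r //; lra.
have : INR (T_inf n) / (kappa * rho ^ n * R3 n) < 2 by lra.
move=> H2; have := Rmult_lt_compat_r _ _ _ Hd H2; lra.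
Qed.
Lemma div_le a b c : 0 < c -> a <= b * c -> a / c <= b.
Proof.
move=> c0 H; apply: (Rmult_le_reg_r c) => //.
rewrite /Rdiv Rmult_assoc Rinv_l ?Rmult_1_r //; lra.
Qed.

Lemma sum_half kappa rho N : 0 < kappa -> 1 < rho -> (1 <= N)%nat ->
  (forall n, (N <= n)%nat -> INR (T_inf n) <= 2 * kappa * rho ^ n * R3 n) ->
  exists L, (N <= L)%nat /\ forall M, (L <= M)%nat ->
    foldr (fun j acc => INR (T_inf j.+1) / rho ^ j + acc) 0 (seq.iota M M) <= 1/2.
Proof.
move=> k0 r1 N1 HN.
have kr : 0 < 4 * kappa * rho by apply: Rmult_lt_0_compat; lra.
have [L0 HL0] := INR_unbounded (exp (2 * ln (4 * kappa * rho))).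
exists (maxn L0 N); split; first by rewrite leq_max leqnn orbT.
move=> M; rewrite geq_max => /andP[LM NM].
have M1 : (1 <= M)%nat by apply: leq_trans NM.
have HM1 : 1 <= INR M by have := INR_leP M1.
apply: Rle_trans (@fold_le _ _ (2 * kappa * rho * R3 M) _) _.
  move=> j; rewrite mem_iota => /andP[Mj _].
  have Nj : (N <= j.+1)%nat by apply: leq_trans NM (leq_trans Mj (leqnSn j)).
  apply: div_le; first by apply: pow_lt; lra.
  apply: Rle_trans (HN _ Nj) _.
  have := R3_mono M1 (leq_trans Mj (leqnSn j)).
  have := R3_pos M; have := R3_pos j.+1.
  have rj : 0 < rho ^ j by apply: pow_lt; lra.
  rewrite /= => p1 p2 H.
  have : 2 * kappa * (rho * rho ^ j) * R3 j.+1 <= 2 * kappa * (rho * rho ^ j) * R3 M.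
    apply: Rmult_le_compat_l => //; apply: Rmult_le_pos; first lra.
    apply: Rmult_le_pos; lra.
  lra.
rewrite size_iota.
have -> : INR M * (2 * kappa * rho * R3 M) = 2 * kappa * rho * (INR M * R3 M) by ring.
rewrite M_R3 //.
have He : exp (- (1 / 2) * ln (INR M)) <= / (4 * kappa * rho).
  rewrite -(exp_ln (4 * kappa * rho)) // -exp_Ropp; apply: exp_mono.
  have : ln (exp (2 * ln (4 * kappa * rho))) <= ln (INR M).
    apply: ln_le; first exact: exp_pos.
    have := INR_leP LM; lra.
  rewrite ln_exp; lra.
apply: Rle_trans (Rmult_le_compat_l _ _ _ _ He) _; first nra.
by right; field; split; lra.
Qed.
Lemma D_bound kappa rho N : 0 < kappa -> 1 < rho -> (1 <= N)%nat ->
  (forall n, (N <= n)%nat -> INR (T_inf n) <= 2 * kappa * rho ^ n * R3 n) ->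
  exists D, 1 <= D /\ forall k, INR (T_inf k.+1) <= D * rho ^ k.
Proof.
move=> k0 r1 N1 HN.
have [D0 HD0] := finmax (fun k => INR (T_inf k.+1) / rho ^ k) N.
exists (Rmax 1 (Rmax (2 * kappa * rho) D0)); split; first exact: Rmax_l.
move=> k; have rk : 0 < rho ^ k by apply: pow_lt; lra.
have Tk0 : 0 <= INR (T_inf k.+1) by apply: pos_INR.
case: (ltnP k N) => kN.
  have := HD0 _ kN => H.
  have E : INR (T_inf k.+1) = INR (T_inf k.+1) / rho ^ k * rho ^ k.
    by rewrite /Rdiv Rmult_assoc Rinv_l ?Rmult_1_r //; lra.
  rewrite E; apply: Rmult_le_compat_r; first lra.
  apply: Rle_trans H _; apply: Rle_trans (Rmax_r _ _) (Rmax_r _ _).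
have := HN _ (leq_trans kN (leqnSn k)).
have := R3_le1 (ltn0Sn k); have := R3_pos k.+1.
have Hm : 2 * kappa * rho <= Rmax 1 (Rmax (2 * kappa * rho) D0).
  apply: Rle_trans (Rmax_l _ _) (Rmax_r _ _).
rewrite /= => p1 p2 H.
have : 2 * kappa * (rho * rho ^ k) * R3 k.+1 <= 2 * kappa * (rho * rho ^ k) * 1.
  apply: Rmult_le_compat_l => //; apply: Rmult_le_pos; first lra.
  apply: Rmult_le_pos; lra.
move=> H2; apply: Rle_trans H _; apply: Rle_trans H2 _.
have : 2 * kappa * rho * rho ^ k <= Rmax 1 (Rmax (2 * kappa * rho) D0) * rho ^ k.
  by apply: Rmult_le_compat_r; lra.
lra.
Qed.
Lemma main_ind rho (a D : R) M : 1 < rho -> 1 <= D -> (1 <= M)%nat -> a <= INR M ->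
  (forall k, INR (T_inf k.+1) <= D * rho ^ k) ->
  foldr (fun j acc => INR (T_inf j.+1) / rho ^ j + acc) 0 (seq.iota M M) <= 1/2 ->
  forall k, INR (T_inf_a a k.+1) <= 2 * D * rho ^ k * exp (- (ln 2 / (2 * INR M)) * INR k).
Proof.
move=> r1 D1 M1 aM HD Hs.
have HM1 : 1 <= INR M by have := INR_leP M1.
have l2 : 0 < ln 2 by have := ln_lt_2; lra.
set c := ln 2 / (2 * INR M).
have c0 : 0 < c by rewrite /c; apply: Rdiv_lt_0_compat; lra.
have cj : forall j, (j < M + M)%nat -> c * INR j <= ln 2.
  move=> j /ltnW /INR_leP; rewrite plus_INR => Hj.
  have H1 : INR j / (2 * INR M) <= 1 by apply: div_le; lra.
  have -> : c * INR j = ln 2 * (INR j / (2 * INR M)) by rewrite /c; field; lra.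
  have := Rmult_le_compat_l _ _ _ (Rlt_le _ _ l2) H1; lra.
have e2 : forall j, (j < M + M)%nat -> exp (c * INR j) <= 2.
  by move=> j /cj H; rewrite -(exp_ln 2); [apply: exp_mono | lra].
have e2' : forall j, (j < M + M)%nat -> / 2 <= exp (- c * INR j).
  move=> j /cj H; rewrite -(exp_ln 2); last lra.
  rewrite -exp_Ropp; apply: exp_mono; lra.
move=> k; induction k as [k IH] using lt_wf_ind.
have rk : 0 < rho ^ k by apply: pow_lt; lra.
have Ek : 0 < exp (- c * INR k) by apply: exp_pos.
case: (ltnP k M) => kM.
  have H1 := INR_leP (Sa_St a k.+1).
  have H2 := HD k.
  have H3 := e2' k (leq_trans kM (leq_addr M M)).
  change (INR (size (Sa a k.+1)) <= 2 * D * rho ^ k * exp (- c * INR k)).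
  have : D * rho ^ k * / 2 <= D * rho ^ k * exp (- c * INR k).
    apply: Rmult_le_compat_l => //; nra.
  change (INR (T_inf k.+1)) with (INR (size (St k.+1))) in H2.
  lra.
have Hc := INR_leP (count_split a M k M1 aM kM).
change (INR (size (Sa a k.+1)) <= 2 * D * rho ^ k * exp (- c * INR k)).
apply: Rle_trans Hc _.
set W := 4 * D * rho ^ k * exp (- c * INR k).
have W0 : 0 <= W by rewrite /W; apply: Rmult_le_pos; [nra | lra].
apply: Rle_trans (@sum_le _ _ (fun j => INR (T_inf j.+1) / rho ^ j) W _) _; last first.
  have : foldr (fun j acc => INR (T_inf j.+1) / rho ^ j + acc) 0 (seq.iota M M) * W <= 1/2 * W.
    by apply: Rmult_le_compat_r.
  rewrite /W; lra.
move=> j; rewrite mem_iota => /andP[Mj jM].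
have rj : 0 < rho ^ j by apply: pow_lt; lra.
have wj : 0 <= INR (T_inf j.+1) / rho ^ j.
  by apply: Rdiv_le_0_compat; [apply: pos_INR | lra].
rewrite mult_INR.
case: (leqP j k) => jk; last first.
  have -> : (k.+1 - j = 0)%nat by apply/eqP; rewrite subn_eq0.
  change (INR (size (Sa a 0))) with 0.
  rewrite Rmult_0_r; exact: Rmult_le_pos.
have -> : (k.+1 - j = (k - j).+1)%nat by rewrite subSn.
have kj : (k - j < k)%coq_nat.
  apply/ltP; rewrite ltn_subrL; apply/andP; split; first exact: leq_trans M1 Mj.
  exact: leq_trans M1 (leq_trans Mj jk).
have IHj := IH _ kj.
change (INR (size (Sa a (k - j).+1))) with (INR (T_inf_a a (k - j).+1)).
change (INR (size (St j.+1))) with (INR (T_inf j.+1)).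
have Ekj : rho ^ (k - j) * exp (- c * INR (k - j)) = rho ^ k * exp (- c * INR k) * / rho ^ j * exp (c * INR j).
  have -> : rho ^ k = rho ^ j * rho ^ (k - j) by rewrite -pow_add; congr (rho ^ _); symmetry; exact: (subnKC jk).
  rewrite minus_INR; last by apply/leP.
  have -> : - c * (INR k - INR j) = - c * INR k + c * INR j by ring.
  rewrite exp_plus; field; lra.
have Ej := e2 j jM.
have Tj : INR (T_inf j.+1) = INR (T_inf j.+1) / rho ^ j * rho ^ j.
  by rewrite /Rdiv Rmult_assoc Rinv_l ?Rmult_1_r //; lra.
set w := INR (T_inf j.+1) / rho ^ j in wj Tj *.
rewrite Tj.
apply: Rle_trans (Rmult_le_compat_l _ _ _ _ IHj) _.
  apply: Rmult_le_pos => //; lra.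
have -> : w * rho ^ j * (2 * D * rho ^ (k - j) * exp (- (ln 2 / (2 * INR M)) * INR (k - j)))
  = w * (2 * D * (rho ^ j * (rho ^ (k - j) * exp (- c * INR (k - j))))) by rewrite /c; ring.
rewrite Ekj.
have -> : rho ^ j * (rho ^ k * exp (- c * INR k) * / rho ^ j * exp (c * INR j))
  = rho ^ k * exp (- c * INR k) * exp (c * INR j) by field; lra.
apply: Rmult_le_compat_l => //.
rewrite /W.
have : 2 * D * (rho ^ k * exp (- c * INR k)) * exp (c * INR j) <= 2 * D * (rho ^ k * exp (- c * INR k)) * 2.
  apply: Rmult_le_compat_l => //; apply: Rmult_le_pos; first lra.
  apply: Rmult_le_pos; lra.
lra.
Qed.
Lemma ceil_nat a : 0 <= a -> exists m, a <= INR m <= a + 1.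
Proof.
move=> a0; have [H1 H2] := archimed a.
have Hz : (0 < up a)%Z by apply: lt_IZR; lra.
exists (Z.to_nat (up a)); rewrite INR_IZR_INZ Z2Nat.id; [lra | lia].
Qed.

Theorem main_aux (kappa rho : R) :
  0 < kappa -> 1 < rho ->
  is_lim_seq (fun n : nat => INR (T_inf n) /
                 (kappa * rho ^ n * Rpower (INR n) (-3/2))) 1 ->
  exists A B : R, 0 < A /\ 0 < B /\
    forall (k : nat) (a : R), 1 <= a ->
      INR (T_inf_a a (k + 1)%coq_nat) <= A * rho ^ k * exp (- B * INR k / a).
Proof.
move=> k0 r1 Hlim.
have [N [N1 HN]] := lim_bound kappa rho k0 r1 Hlim.
have [L [NL HL]] := sum_half kappa rho N k0 r1 N1 HN.
have [D [D1 HD]] := D_bound kappa rho N k0 r1 N1 HN.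
have L1 : (1 <= L)%nat by apply: leq_trans NL.
have HL1 : 1 <= INR L by have := INR_leP L1.
have l2 : 0 < ln 2 by have := ln_lt_2; lra.
exists (2 * D), (ln 2 / (4 * INR L)); split; first lra.
split; first by apply: Rdiv_lt_0_compat; lra.
move=> k a a1.
have a0 : 0 <= a by lra.
have [m [am1 am2]] := ceil_nat a a0.
set M := maxn L m.
have M1 : (1 <= M)%nat by apply: leq_trans L1 (leq_maxl L m).
have HM1 : 1 <= INR M by have := INR_leP M1.
have HmM : INR m <= INR M := INR_leP (leq_maxr L m).
have aM : a <= INR M by lra.
have ML : INR M <= 2 * INR L * a.
  case: (leqP L m) => Lm.
    have -> : M = m by apply/maxn_idPr.
    nra.
  have -> : M = L by apply/maxn_idPl/ltnW.
  nra.
have H := main_ind rho a D M r1 D1 M1 aM HD (HL M (leq_maxl L m)) k.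
have -> : (k + 1)%coq_nat = k.+1 by rewrite Nat.add_1_r.
apply: Rle_trans H _.
have P : 0 < 2 * D * rho ^ k by apply: Rmult_lt_0_compat; [lra | apply: pow_lt; lra].
apply: Rmult_le_compat_l; first lra.
apply: exp_mono.
have Hk : 0 <= INR k by apply: pos_INR.
have Hinv : / (4 * INR L * a) <= / (2 * INR M).
  apply: Rinv_le_contravar; lra.
have -> : - (ln 2 / (4 * INR L)) * INR k / a = - (ln 2 * INR k) * / (4 * INR L * a) by field; lra.
have -> : - (ln 2 / (2 * INR M)) * INR k = - (ln 2 * INR k) * / (2 * INR M) by field; lra.
have : 0 <= ln 2 * INR k by nra.
nra.
Qed.

End Aux.

Open Scope R_scope.

(* kappa, rho are Otter's constants: T_inf n ~ kappa rho^n n^(-3/2). *)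
Theorem lemma26 (kappa rho : R) :
  0 < kappa -> 1 < rho ->
  is_lim_seq (fun n : nat => INR (T_inf n) /
                 (kappa * rho ^ n * Rpower (INR n) (-3/2))) 1 ->
  exists A B : R, 0 < A /\ 0 < B /\
    forall (k : nat) (a : R), 1 <= a ->
      INR (T_inf_a a (k + 1)) <= A * rho ^ k * exp (- B * INR k / a).
Proof.
exact (Aux.main_aux kappa rho).
Qed.
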